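(* Let $i\ge2$ be an integer. The map $[0,\pi/2]\ni\alpha\mapsto\mathcal{F}^{[i]}_\alpha$, with values in the space of nonempty compact subsets of $\mathbb{R}^2$ equipped with the Hausdorff metric, is continuous from above at $\alpha=0$. That is, the Hausdorff distance between $\mathcal{F}^{[i]}_\alpha$ and $\mathcal{F}^{[i]}_0$ tends to $0$ as $\alpha\to0^+$.
   Context: For an integer $i\ge2$, the $i$-Fibonacci words over $\{0,1\}$ are defined by $f^{[i]}_1=0$, $f^{[i]}_2=0^{i-1}1$ (where $0^{i-1}$ denotes $i-1$ zeros), and $f^{[i]}_n=f^{[i]}_{n-1}f^{[i]}_{n-2}$ for $n\ge3$. Drawing rule with drawing angle $\alpha$: given a word $a_1\cdots a_N$, start at the origin with current direction $\theta=\pi/2$. For $j=1,\dots,N$, first draw a unit segment from the current point in direction $\theta$ and move the current point to its endpoint. Then update the direction: if $a_j=0$ and $j$ is even, $\theta\mapsto\theta+\alpha$; if $a_j=0$ and $j$ is odd, $\theta\mapsto\theta-\alpha$; if $a_j=1$, $\theta$ is unchanged. $\mathcal{F}^{[i]}_n$ is the union of the segments drawn for $f^{[i]}_n$, and $w^{[i]}_n$ is the distance between its first vertex (the origin) and its last vertex. Let $m(k)=6k+5$ if $i$ is even and $m(k)=6k+3$ if $i$ is odd. For $\alpha\in(0,\pi/2]$, the Fibonacci fractal $\mathcal{F}^{[i]}_\alpha$ is the limit, in the Hausdorff metric, of $\frac{\sqrt2}{w^{[i]}_{m(k)}}\mathcal{F}^{[i]}_{m(k)}$ (dilation about the origin)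 as $k\to\infty$; this limit exists. For $\alpha=0$ all curves are vertical segments starting at the origin, and $\mathcal{F}^{[i]}_0$ is the segment from $(0,0)$ to $(0,\sqrt2)$. The Hausdorff metric between nonempty compact sets $U,V\subset\mathbb{R}^2$ is the standard one, $\max\{\sup_{x\in U}\operatorname{dist}(x,V),\sup_{y\in V}\operatorname{dist}(y,U)\}$ (or an equivalent variant). *)

(* Defs.v *)
From Stdlib Require Import Reals Lra Lia List Arith.
Import ListNotations.
Open Scope R_scope.

Definition pt := (R * R)%type.

Definition dist2 (x y : pt) : R :=
  sqrt ((fst x - fst y) ^ 2 + (snd x - snd y) ^ 2).

(* i-Fibonacci words over {0,1} (letters encoded as nat 0 / 1).
   fibpair i n = (f_{n+1}, f_{n+2}). *)
Fixpoint fibpair (i : nat) (n : nat) : list nat * list nat :=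
  match n with
  | O => ([0%nat], repeat 0%nat (i - 1) ++ [1%nat])
  | S n' => let (a, b) := fibpair i n' in (b, b ++ a)
  end.

(* fib_word i n = f^{[i]}_n for n >= 1 (f^{[i]}_0 is irrelevant, set to f_1). *)
Definition fib_word (i n : nat) : list nat := fst (fibpair i (n - 1)).

(* Drawing rule: vertices of the curve. [draw_aux alpha w j p th] draws the
   word w whose first letter has (1-based) index j, from the current point p
   with current direction th. *)
Fixpoint draw_aux (alpha : R) (w : list nat) (j : nat) (p : pt) (th : R)
  : list pt :=
  match w with
  | [] => [p]
  | a :: w' =>
      let q := (fst p + cos th, snd p + sin th) in
      let th' := if Nat.eqb a 0
                 then (if Nat.even j then th + alpha else th - alpha)
                 else th in
      p :: draw_aux alpha w' (S j) q th'
  end.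

Definition vertices (alpha : R) (w : list nat) : list pt :=
  draw_aux alpha w 1 (0, 0) (PI / 2).

Definition curve (alpha : R) (w : list nat) : pt -> Prop :=
  fun x => exists k : nat, (S k < length (vertices alpha w))%nat /\
    exists t : R, 0 <= t <= 1 /\
      x = ((1 - t) * fst (nth k (vertices alpha w) (0,0))
             + t * fst (nth (S k) (vertices alpha w) (0,0)),
           (1 - t) * snd (nth k (vertices alpha w) (0,0))
             + t * snd (nth (S k) (vertices alpha w) (0,0))).

Definition width (alpha : R) (w : list nat) : R :=
  dist2 (0, 0) (last (vertices alpha w) (0, 0)).

Definition dilate (c : R) (A : pt -> Prop) : pt -> Prop :=
  fun x => exists y, A y /\ x = (c * fst y, c * snd y).

Definition m_index (i k : nat) : nat :=
  if Nat.even i then (6 * k + 5)%nat else (6 * k + 3)%nat.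

Definition normalized_curve (i : nat) (alpha : R) (k : nat) : pt -> Prop :=
  dilate (sqrt 2 / width alpha (fib_word i (m_index i k)))
         (curve alpha (fib_word i (m_index i k))).

(* Hausdorff closeness: Hausdorff distance (variant with closed
   neighbourhoods) at most e. *)
Definition hclose (A B : pt -> Prop) (e : R) : Prop :=
  (forall x, A x -> exists y, B y /\ dist2 x y <= e) /\
  (forall y, B y -> exists x, A x /\ dist2 x y <= e).

Definition nonempty_set (A : pt -> Prop) : Prop := exists x, A x.
Definition closed_set (A : pt -> Prop) : Prop :=
  forall x, (forall e, 0 < e -> exists y, A y /\ dist2 x y < e) -> A x.
Definition bounded_set (A : pt -> Prop) : Prop :=
  exists M, forall x, A x -> dist2 (0, 0) x <= M.
Definition compact_set (A : pt -> Prop) : Prop := closed_set A /\ bounded_set A.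

Definition hausdorff_limit (S : nat -> pt -> Prop) (K : pt -> Prop) : Prop :=
  forall e, 0 < e -> exists k0, forall k, (k0 <= k)%nat -> hclose (S k) K e.

Definition fractal0 : pt -> Prop :=
  fun x => exists t, 0 <= t <= 1 /\ x = (0, t * sqrt 2).

(* Main.v *)
Require Import Defs.
From Stdlib Require Import Reals Lra Lia List Arith.
Import ListNotations.
Open Scope R_scope.


Definition A (i m : nat) : list nat := fst (fibpair i m).

Lemma A_S i m : A i (S m) = snd (fibpair i m).
Proof. unfold A; simpl; destruct (fibpair i m); reflexivity. Qed.

Lemma A_SS i m : A i (S (S m)) = A i (S m) ++ A i m.
Proof.
  unfold A; simpl. destruct (fibpair i m) as [a b] eqn:E. simpl. reflexivity.
Qed.

Lemma A_0 i : A i 0 = [0%nat].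
Proof. reflexivity. Qed.
Lemma A_1 i : A i 1 = repeat 0%nat (i - 1) ++ [1%nat].
Proof. reflexivity. Qed.

Fixpoint turnR (w : list nat) (j : nat) : R :=
  match w with
  | [] => 0
  | a :: w' => (if Nat.eqb a 0 then (if Nat.even j then 1 else -1) else 0)
               + turnR w' (S j)
  end.

Lemma turnR_app u v j : turnR (u ++ v) j = turnR u j + turnR v (j + length u).
Proof.
  revert j; induction u as [|a u IH]; intros j; simpl.
  - rewrite Nat.add_0_r; ring.
  - rewrite IH. replace (S j + length u)%nat with (j + S (length u))%nat by lia. ring.
Qed.

Lemma turnR_S w j : turnR w (S j) = - turnR w j.
Proof.
  revert j; induction w as [|a w IH]; intros j; cbn [turnR].
  - ring.
  - rewrite IH. rewrite Nat.even_succ, <- Nat.negb_even.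
    destruct (Nat.eqb a 0), (Nat.even j); simpl; ring.
Qed.

Lemma turnR_par w j k : turnR w (j + k) = if Nat.even k then turnR w j else - turnR w j.
Proof.
  induction k as [|k IH].
  - rewrite Nat.add_0_r; reflexivity.
  - rewrite Nat.add_succ_r, turnR_S, IH, Nat.even_succ, <- Nat.negb_even.
    destruct (Nat.even k); simpl; ring.
Qed.

Lemma turnR_rep_even k j : turnR (repeat 0%nat (2 * k)) j = 0.
Proof.
  revert j; induction k as [|k IH]; intros j.
  - reflexivity.
  - replace (2 * S k)%nat with (S (S (2 * k))) by lia.
    change (repeat 0%nat (S (S (2 * k)))) with (0%nat :: 0%nat :: repeat 0%nat (2 * k)).
    cbn [turnR Nat.eqb]. rewrite IH, Nat.even_succ, <- Nat.negb_even.
    destruct (Nat.even j); simpl; ring.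
Qed.

Lemma turnR_app1 w j : turnR (w ++ [1%nat]) j = turnR w j.
Proof. rewrite turnR_app; simpl; ring. Qed.

Definition Tt (b : bool) (r : nat) : R :=
  if b then
    match r with 0 => -1 | 1 => -1 | 2 => -2 | 3 => -1 | 4 => 1 | _ => 0 end
  else
    match r with 0 => -1 | 1 => 0 | 2 => 1 | 3 => 1 | 4 => 0 | _ => -1 end.

(* true = even length *)
Definition Pt (b : bool) (r : nat) : bool :=
  if b then
    match r with 0 => false | 1 => true | 2 => false | 3 => false | 4 => true | _ => false end
  else
    match r with 0 => false | 1 => false | 2 => true | 3 => false | 4 => false | _ => true end.

Lemma T0 i : turnR (A i 0) 1 = -1.
Proof. simpl. ring. Qed.

Lemma T1 i : (2 <= i)%nat -> turnR (A i 1) 1 = Tt (Nat.even i) 1.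
Proof.
  intros Hi. rewrite A_1, turnR_app1.
  destruct (Nat.Even_or_Odd i) as [[k Hk]|[k Hk]]; subst i.
  - replace (2 * k - 1)%nat with (S (2 * (k - 1))) by lia.
    rewrite Nat.even_mul.
    change (repeat 0%nat (S (2 * (k - 1)))) with (0%nat :: repeat 0%nat (2 * (k - 1))).
    cbn [turnR Nat.eqb]. rewrite turnR_rep_even. simpl. ring.
  - replace (2 * k + 1 - 1)%nat with (2 * k)%nat by lia.
    rewrite turnR_rep_even.
    replace (Nat.even (2 * k + 1)) with false.
    + reflexivity.
    + rewrite Nat.even_add, Nat.even_mul. reflexivity.
Qed.

Lemma L1par i : (2 <= i)%nat -> Nat.even (length (A i 1)) = Nat.even i.
Proof.
  intros Hi. rewrite A_1, length_app, repeat_length. simpl.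
  replace (i - 1 + 1)%nat with i by lia. reflexivity.
Qed.

Lemma table_rec b r : (r < 6)%nat ->
  Tt b ((r + 2) mod 6) = Tt b ((r + 1) mod 6) +
    (if Pt b ((r + 1) mod 6) then Tt b r else - Tt b r) /\
  Pt b ((r + 2) mod 6) = Bool.eqb (Pt b ((r + 1) mod 6)) (Pt b r).
Proof.
  intros Hr. destruct b; do 6 (destruct r as [|r]; [simpl; split; [ring|reflexivity]|]); lia.
Qed.

Lemma TP_period i : (2 <= i)%nat -> forall m,
  turnR (A i m) 1 = Tt (Nat.even i) (m mod 6) /\
  Nat.even (length (A i m)) = Pt (Nat.even i) (m mod 6).
Proof.
  intros Hi m. induction m as [m IH] using (well_founded_induction lt_wf).
  destruct m as [|[|m]].
  - rewrite T0. destruct (Nat.even i); split; reflexivity.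
  - split; [apply T1; exact Hi|]. rewrite L1par by exact Hi.
    destruct (Nat.even i) eqn:E; reflexivity.
  - destruct (IH m ltac:(lia)) as [Ta Pa].
    destruct (IH (S m) ltac:(lia)) as [Tb Pb].
    rewrite A_SS, turnR_app, length_app.
    replace (1 + length (A i (S m)))%nat with (1 + length (A i (S m)))%nat by reflexivity.
    rewrite turnR_par, Nat.even_add.
    assert (Hr : (m mod 6 < 6)%nat) by (apply Nat.mod_upper_bound; lia).
    destruct (table_rec (Nat.even i) (m mod 6) Hr) as [R1 R2].
    rewrite Nat.add_mod_idemp_l in R1, R2 by lia.
    replace (S m) with (m + 1)%nat in * by lia.
    replace (S (m + 1)) with (m + 2)%nat by lia.
    rewrite (Nat.add_mod_idemp_l m 1 6) in R1, R2 by lia.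
    rewrite R1, R2, <- Tb, <- Pb, <- Ta, <- Pa. split; [|reflexivity].
    destruct (Nat.even (length (A i (m + 1)))); reflexivity.
Qed.


Definition padd (p q : pt) : pt := (fst p + fst q, snd p + snd q).
Definition psub (p q : pt) : pt := (fst p - fst q, snd p - snd q).
Definition Rot (t : R) (q : pt) : pt :=
  (fst q * cos t - snd q * sin t, fst q * sin t + snd q * cos t).
Definition Mir (q : pt) : pt := (- fst q, snd q).

Lemma Rot_cs d a : Rot d (cos a, sin a) = (cos (a + d), sin (a + d)).
Proof. unfold Rot; simpl. rewrite cos_plus, sin_plus. f_equal; ring. Qed.

Lemma draw_nonnil al w j p th : draw_aux al w j p th <> [].
Proof. destruct w; simpl; discriminate. Qed.

Lemma draw_cov al w : forall j p th p0 th0,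
  draw_aux al w j p th =
  map (fun q => padd p (Rot (th - th0) (psub q p0))) (draw_aux al w j p0 th0).
Proof.
  induction w as [|a w IH]; intros j p th p0 th0; simpl.
  - f_equal. unfold padd, psub, Rot; simpl. destruct p; simpl; f_equal; ring.
  - f_equal.
    + unfold padd, psub, Rot; destruct p; simpl; f_equal; ring.
    + set (th1 := if (a =? 0)%nat then if Nat.even j then th + al else th - al else th).
      set (th2 := if (a =? 0)%nat then if Nat.even j then th0 + al else th0 - al else th0).
      assert (Hd : th1 - th2 = th - th0).
      { unfold th1, th2; destruct (a =? 0)%nat; [destruct (Nat.even j)|]; ring. }
      rewrite (IH (S j) _ th1 (fst p0 + cos th0, snd p0 + sin th0) th2).
      apply map_ext. intros q. rewrite Hd.
      pose proof (Rot_cs (th - th0) th0) as HR.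
      replace (th0 + (th - th0)) with th in HR by ring.
      unfold Rot in HR; simpl in HR. inversion HR as [[H1 H2]]. unfold padd, psub, Rot; simpl.
      f_equal; ring.
Qed.

Lemma draw_rot al w j p th :
  draw_aux al w j p th =
  map (fun q => padd p (Rot (th - PI/2) q)) (draw_aux al w j (0,0) (PI/2)).
Proof.
  rewrite (draw_cov al w j p th (0,0) (PI/2)). apply map_ext. intros q.
  replace (psub q (0,0)) with q; [reflexivity|].
  destruct q; unfold psub; simpl; f_equal; ring.
Qed.

Lemma draw_shift al w : forall j p th,
  draw_aux al w (S j) p th = draw_aux (- al) w j p th.
Proof.
  induction w as [|a w IH]; intros j p th; cbn [draw_aux]; [reflexivity|].
  f_equal. rewrite IH. f_equal.
  rewrite Nat.even_succ, <- Nat.negb_even.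
  destruct (a =? 0)%nat; [destruct (Nat.even j)|]; simpl; ring.
Qed.

Lemma draw_shift2 al w j p th :
  draw_aux al w (S (S j)) p th = draw_aux al w j p th.
Proof. rewrite !draw_shift, Ropp_involutive. reflexivity. Qed.

Lemma draw_shift_even al w j k p th : Nat.even k = true ->
  draw_aux al w (k + j) p th = draw_aux al w j p th.
Proof.
  intros Hk. destruct (Nat.Even_or_Odd k) as [[l Hl]|[l Hl]]; subst k.
  - clear Hk. induction l as [|l IHl]; [reflexivity|].
    replace (2 * S l + j)%nat with (S (S (2 * l + j))) by lia.
    rewrite draw_shift2. exact IHl.
  - rewrite Nat.even_add, Nat.even_mul in Hk. simpl in Hk. discriminate.
Qed.

Lemma draw_mir al w : forall j p th,
  draw_aux (- al) w j (Mir p) (PI - th) = map Mir (draw_aux al w j p th).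
Proof.
  induction w as [|a w IH]; intros j p th; simpl; [reflexivity|].
  f_equal.
  set (th1 := if (a =? 0)%nat then if Nat.even j then th + al else th - al else th).
  replace (if (a =? 0)%nat then if Nat.even j then PI - th + - al else PI - th - - al
           else PI - th) with (PI - th1)
    by (unfold th1; destruct (a =? 0)%nat; [destruct (Nat.even j)|]; ring).
  rewrite <- IH. f_equal. unfold Mir; simpl.
  rewrite cos_minus, sin_minus, cos_PI, sin_PI. f_equal; ring.
Qed.

Lemma vert_mir al w j :
  draw_aux (- al) w j (0,0) (PI/2) = map Mir (draw_aux al w j (0,0) (PI/2)).
Proof.
  rewrite <- draw_mir. unfold Mir; simpl.
  replace (PI - PI/2) with (PI/2) by field. f_equal. f_equal. ring.
Qed.

Lemma draw_app al u : forall v j p th,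
  draw_aux al (u ++ v) j p th =
  removelast (draw_aux al u j p th) ++
  draw_aux al v (j + length u) (last (draw_aux al u j p th) (0,0)) (th + al * turnR u j).
Proof.
  induction u as [|a u IH]; intros v j p th.
  - simpl. rewrite Nat.add_0_r. f_equal. ring.
  - cbn [app draw_aux length turnR].
    rewrite IH.
    set (l := draw_aux al u (S j) _ _).
    assert (Hl : l <> []) by apply draw_nonnil.
    replace (removelast (p :: l)) with (p :: removelast l)
      by (destruct l; [contradiction|reflexivity]).
    replace (last (p :: l) (0,0)) with (last l (0,0))
      by (destruct l; [contradiction|reflexivity]).
    simpl. f_equal. f_equal. f_equal; [lia|].
    destruct (a =? 0)%nat; [destruct (Nat.even j)|]; ring.
Qed.


Definition VA (i : nat) (al : R) (m : nat) : list pt := vertices al (A i m).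
Definition EE (i : nat) (al : R) (m : nat) : pt := last (VA i al m) (0,0).
Definition TT i m := turnR (A i m) 1.
Definition PP i m := Nat.even (length (A i m)).
Definition gmap (i : nat) (al : R) (m : nat) (q : pt) : pt :=
  padd (EE i al m) (Rot (al * TT i m) (if PP i m then q else Mir q)).

Lemma VA_nonnil i al m : VA i al m <> [].
Proof. apply draw_nonnil. Qed.

Lemma VA_decomp i al m :
  VA i al (S (S m)) = removelast (VA i al (S m)) ++ map (gmap i al (S m)) (VA i al m).
Proof.
  unfold VA, vertices. rewrite A_SS, draw_app. f_equal.
  rewrite draw_rot. fold (vertices al (A i (S m))).
  unfold gmap, EE, VA, TT, PP.
  set (L := length (A i (S m))).
  set (E := last (vertices al (A i (S m))) (0,0)).
  replace (PI / 2 + al * turnR (A i (S m)) 1 - PI / 2) with (al * turnR (A i (S m)) 1) by ring.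
  destruct (Nat.even L) eqn:HL.
  - rewrite Nat.add_comm, draw_shift_even by exact HL. reflexivity.
  - destruct L as [|L']. discriminate.
    replace (1 + S L')%nat with (S (L' + 1)) by lia.
    rewrite draw_shift, draw_shift_even.
    + rewrite vert_mir, map_map. reflexivity.
    + rewrite Nat.even_succ, <- Nat.negb_even in HL. destruct (Nat.even L'); [reflexivity|discriminate].
Qed.

Lemma last_app_map {X} (l1 l2 : list X) (f : X -> X) d :
  l2 <> [] -> last (l1 ++ map f l2) d = f (last l2 d).
Proof.
  intros H. destruct (exists_last H) as [l' [x E]]. rewrite E.
  rewrite map_app, app_assoc. simpl. rewrite !last_last. reflexivity.
Qed.

Lemma EE_rec i al m : EE i al (S (S m)) = gmap i al (S m) (EE i al m).
Proof.
  unfold EE at 1. rewrite VA_decomp, last_app_map by apply VA_nonnil. reflexivity.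
Qed.

Lemma in_removelast {X} (l : list X) x : In x (removelast l) -> In x l.
Proof.
  induction l as [|a l IH]; simpl; [tauto|].
  destruct l as [|b l]; simpl; [tauto|]. intros [H|H]; [left; exact H|right; apply IH; exact H].
Qed.

Lemma VA_in i al m q : In q (VA i al (S (S m))) ->
  In q (VA i al (S m)) \/ exists r, In r (VA i al m) /\ q = gmap i al (S m) r.
Proof.
  rewrite VA_decomp. intros H. apply in_app_or in H. destruct H as [H|H].
  - left. apply in_removelast. exact H.
  - right. apply in_map_iff in H. destruct H as [r [H1 H2]]. exists r. split; auto.
Qed.


Definition good (al : R) (d : pt) : Prop :=
  exists a b, 0 <= a <= b /\ d = (a * sin al, b + a * cos al).

Definition good2 (al : R) (d : pt) : Prop :=
  exists a b, 0 <= a /\ 0 <= b /\ d = (a * sin al, b + a * cos al).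

Lemma good_good2 al d : good al d -> good2 al d.
Proof. intros [a [b [H E]]]. exists a, b. repeat split; try lra; exact E. Qed.

Lemma good2_add al d1 d2 : good2 al d1 -> good2 al d2 -> good2 al (padd d1 d2).
Proof.
  intros [a1 [b1 [H1 [H1' E1]]]] [a2 [b2 [H2 [H2' E2]]]]. exists (a1 + a2), (b1 + b2).
  split; [lra|split;[lra|]]. subst; unfold padd; simpl; f_equal; ring.
Qed.

Lemma good_add al d1 d2 : good al d1 -> good al d2 -> good al (padd d1 d2).
Proof.
  intros [a1 [b1 [H1 E1]]] [a2 [b2 [H2 E2]]]. exists (a1 + a2), (b1 + b2).
  split; [lra|]. subst; unfold padd; simpl; f_equal; ring.
Qed.

Lemma good0 al : good al (0,0).
Proof. exists 0, 0. split; [lra|]. f_equal; ring. Qed.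

Lemma good_01 al : good al (0,1).
Proof. exists 0, 1. split; [lra|]. f_equal; ring. Qed.

Lemma good_step al : good al (sin al, 1 + cos al).
Proof. exists 1, 1. split; [lra|]. f_equal; ring. Qed.

Lemma psub_padd p d : psub (padd p d) p = d.
Proof. destruct p, d; unfold psub, padd; simpl; f_equal; ring. Qed.

Lemma psub_split p q r : psub q p = padd (psub r p) (psub q r).
Proof. destruct p, q, r; unfold psub, padd; simpl; f_equal; ring. Qed.

Lemma rep_draw al k : forall p,
  let l := draw_aux al (repeat 0%nat k ++ [1%nat]) 1 p (PI/2) in
  (forall q, In q l -> good al (psub q p) /\ good2 al (psub (last l (0,0)) q)) /\
  good al (psub (last l (0,0)) p) /\ good2 al (psub (psub (last l (0,0)) p) (0,1)).
Proof.
  induction k as [k IH] using (well_founded_induction lt_wf). intros p l.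
  assert (E0 : forall x, psub x x = (0,0)) by (intros [x1 x2]; unfold psub; simpl; f_equal; ring).
  destruct k as [|[|k]].
  - subst l. simpl. rewrite cos_PI2, sin_PI2.
    set (p1 := (fst p + 0, snd p + 1)).
    assert (E1 : psub p1 p = (0,1)) by (unfold p1, psub; simpl; f_equal; ring).
    split; [|split].
    + intros q [H|[H|H]]; [| |contradiction]; subst q.
      * rewrite E0, E1. split; [apply good0|apply good_good2, good_01].
      * rewrite E1, E0. split; [apply good_01|apply good_good2, good0].
    + rewrite E1. apply good_01.
    + rewrite E1, E0. apply good_good2, good0.
  - subst l. simpl. rewrite cos_PI2, sin_PI2.
    replace (PI / 2 - al) with (PI/2 + - al) by ring.
    rewrite cos_plus, sin_plus, cos_PI2, sin_PI2, cos_neg, sin_neg.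
    unfold psub; simpl.
    split; [|split].
    + intros q [H|[H|[H|H]]]; [| | |contradiction]; subst q; simpl; split.
      * exists 0, 0; split; [lra|]; f_equal; ring.
      * exists 1, 1; split; [lra|split;[lra|]]; f_equal; ring.
      * exists 0, 1; split; [lra|]; f_equal; ring.
      * exists 1, 0; split; [lra|split;[lra|]]; f_equal; ring.
      * exists 1, 1; split; [lra|]; f_equal; ring.
      * exists 0, 0; split; [lra|split;[lra|]]; f_equal; ring.
    + exists 1, 1; split; [lra|]; f_equal; ring.
    + exists 1, 0; split; [lra|split;[lra|]]; f_equal; ring.
  - subst l. change (repeat 0%nat (S (S k)) ++ [1%nat]) with (0%nat :: 0%nat :: (repeat 0%nat k ++ [1%nat])).
    cbn [draw_aux Nat.eqb Nat.even].
    rewrite cos_PI2, sin_PI2.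
    replace (PI / 2 - al + al) with (PI/2) by ring.
    rewrite draw_shift2.
    replace (PI / 2 - al) with (PI/2 + - al) by ring.
    rewrite cos_plus, sin_plus, cos_PI2, sin_PI2, cos_neg, sin_neg.
    set (p2 := (fst (fst p + 0, snd p + 1) + (0 * cos al - 1 * - sin al),
                snd (fst p + 0, snd p + 1) + (1 * cos al + 0 * - sin al))).
    destruct (IH k ltac:(lia) p2) as [IHq [IHl IHl2]].
    set (r := draw_aux al (repeat 0%nat k ++ [1%nat]) 1 p2 (PI / 2)) in *.
    assert (Hr : r <> []) by apply draw_nonnil.
    assert (Hlast : forall x, last (p :: x :: r) (0,0) = last r (0,0))
      by (intros x; destruct r; [contradiction|reflexivity]).
    rewrite !Hlast.
    assert (Hp2 : psub p2 p = (sin al, 1 + cos al)) by (unfold p2, psub; simpl; f_equal; ring).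
    assert (Gp2 : good al (psub p2 p)) by (rewrite Hp2; apply good_step).
    split; [|split].
    + intros q [H|[H|H]].
      * subst q. split.
        -- replace (psub p p) with (0,0) by (unfold psub; f_equal; ring). apply good0.
        -- apply good_good2. rewrite (psub_split p (last r (0,0)) p2). apply good_add; auto.
      * subst q. split.
        -- unfold psub; simpl. exists 0, 1; split; [lra|]; f_equal; ring.
        -- rewrite (psub_split _ (last r (0,0)) p2). apply good2_add; [|apply good_good2; auto].
           unfold p2, psub; simpl. exists 1, 0; split; [lra|split;[lra|]]; f_equal; ring.
      * destruct (IHq q H) as [G1 G2]. split; auto.
        rewrite (psub_split p q p2). apply good_add; auto.
    + rewrite (psub_split p (last r (0,0)) p2). apply good_add; auto.
    + rewrite (psub_split p (last r (0,0)) p2).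
      replace (psub (padd (psub p2 p) (psub (last r (0,0)) p2)) (0,1))
        with (padd (psub (psub p2 p) (0,1)) (psub (last r (0,0)) p2))
        by (unfold psub, padd; simpl; f_equal; ring).
      apply good2_add; [|apply good_good2; auto].
      rewrite Hp2. unfold psub; simpl. exists 1, 0; split; [lra|split;[lra|]]; f_equal; ring.
Qed.


Definition Lc (b : bool) (r : nat) : R * R * R * R :=
  if b then
    match r with
    | 0 => (1,0,0,1) | 1 => (0,1,-1,1) | 2 => (1,-1,1,-2)
    | 3 => (1,0,2,-1) | 4 => (0,1,1,1) | _ => (1,-1,1,0) end
  else
    match r with
    | 0 => (1,0,0,1) | 1 => (0,1,-1,1) | 2 => (-1,1,-1,0)
    | 3 => (1,-2,0,-1) | 4 => (2,-1,1,-1) | _ => (1,1,1,0) end.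

Definition Nf (b : bool) (r : nat) (x x' : R) : R :=
  let '(a, b1, c, d) := Lc b r in Rmax (Rabs (a * x + b1 * x')) (Rabs (c * x + d * x')).

Definition sg (b : bool) : R := if b then 1 else -1.

Definition Ps (b : bool) (r : nat) : bool :=
  if b then
    match r with 0 => false | 1 => true | 2 => false | 3 => false | 4 => true | _ => false end
  else
    match r with 0 => false | 1 => false | 2 => true | 3 => false | 4 => false | _ => true end.

Ltac brute := unfold Rmax; repeat destruct Rle_dec; unfold Rabs in *; repeat destruct Rcase_abs; lra.

Lemma Nf_step b r x x' f : (r < 6)%nat ->
  Nf b (S r mod 6) (x + sg (Ps b r) * x' + f) x <= Nf b r x x' + 2 * Rabs f.
Proof.
  intros Hr. destruct b; do 6 (destruct r as [|r]; [unfold Nf, Lc, sg, Ps; simpl; brute|]); lia.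
Qed.

Lemma Nf_rec b r x x' : (r < 6)%nat ->
  Rabs x <= 3 * Nf b r x x' /\ Rabs x' <= 3 * Nf b r x x'.
Proof.
  intros Hr. destruct b; do 6 (destruct r as [|r]; [unfold Nf, Lc; simpl; split; brute|]); lia.
Qed.


Lemma Nf_bound b r x x' : (r < 6)%nat -> Nf b r x x' <= 3 * Rmax (Rabs x) (Rabs x').
Proof.
  intros Hr. destruct b; do 6 (destruct r as [|r]; [unfold Nf, Lc; simpl; brute|]); lia.
Qed.


Lemma sin_abs_le t : Rabs (sin t) <= Rabs t.
Proof.
  pose proof (SIN_bound t) as Hb. pose proof PI2_1 as Hpi.
  destruct (Rle_dec 1 (Rabs t)) as [H|H].
  - unfold Rabs in *. destruct (Rcase_abs (sin t)); destruct (Rcase_abs t); lra.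
  - apply Rnot_le_lt in H. unfold Rabs in H.
    destruct (Rtotal_order t 0) as [Hn|[Hz|Hp]].
    + destruct (Rcase_abs t) as [_|]; [|lra].
      pose proof (sin_lt_x (- t) ltac:(lra)) as H1.
      pose proof (sin_ge_0 (- t) ltac:(lra) ltac:(lra)) as H2.
      rewrite sin_neg in H1, H2. rewrite Rabs_left1 by lra. rewrite Rabs_left by lra. lra.
    + subst. rewrite sin_0, Rabs_R0. lra.
    + destruct (Rcase_abs t); [lra|].
      pose proof (sin_lt_x t Hp) as H1.
      pose proof (sin_ge_0 t ltac:(lra) ltac:(lra)) as H2.
      rewrite !Rabs_right by lra. lra.
Qed.

Lemma cos_lower t : 1 - t * t / 2 <= cos t.
Proof.
  replace (cos t) with (cos (2 * (t / 2))) by (f_equal; field).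
  rewrite cos_2a_sin. pose proof (sin_abs_le (t/2)) as H.
  assert (sin (t/2) * sin (t/2) <= (t/2) * (t/2)).
  { pose proof (Rabs_pos (sin (t/2))).
    assert (Rabs (sin (t/2)) * Rabs (sin (t/2)) <= Rabs (t/2) * Rabs (t/2)) by nra.
    rewrite <- !Rabs_mult in H1. rewrite !Rabs_right in H1 by nra. exact H1. }
  lra.
Qed.

Lemma cos_le1 t : cos t <= 1.
Proof. pose proof (COS_bound t); lra. Qed.


Lemma step_real al c s sg X0 Y0 Y1 Phi Phi' :
  0 < al <= 1/100 -> Rabs s <= 2 * al -> 1 - 2 * al * al <= c <= 1 ->
  (sg = 1 \/ sg = -1) -> 1 <= Y0 <= Y1 -> 49/100 * Y1 <= Y0 ->
  Phi <= 10 * al * Y1 -> Rabs X0 <= 3 * Phi ->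
  Phi' <= Phi + 2 * Rabs ((c - 1) * sg * X0 - s * Y0) ->
  let Y2 := Y1 + sg * s * X0 + c * Y0 in
  Y1 <= Y2 /\ 49/100 * Y2 <= Y1 /\ Phi' <= 10 * al * Y2 /\ 14/10 * Y1 <= Y2.
Proof.
  intros Hal Hs Hc Hsg HY HY' HP HX HP' Y2.
  assert (HX' : Rabs X0 <= 30 * al * Y1) by lra.
  assert (Ha2 : al * al <= 1/10000) by nra.
  assert (Hsx : Rabs (sg * s * X0) <= 60 * (al * al) * Y1).
  { rewrite !Rabs_mult. assert (Rabs sg = 1) by (destruct Hsg; subst; unfold Rabs; destruct Rcase_abs; lra).
    rewrite H, Rmult_1_l. pose proof (Rabs_pos s). pose proof (Rabs_pos X0).
    apply Rle_trans with (2 * al * (30 * al * Y1)); [apply Rmult_le_compat; auto|]; nra. }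
  assert (Hcx : Rabs ((c - 1) * sg * X0) <= 2 * (al * al) * (30 * al * Y1)).
  { rewrite !Rabs_mult. assert (Rabs sg = 1) by (destruct Hsg; subst; unfold Rabs; destruct Rcase_abs; lra).
    rewrite H, Rmult_1_r. pose proof (Rabs_pos (c-1)). pose proof (Rabs_pos X0).
    apply Rmult_le_compat; auto. unfold Rabs; destruct Rcase_abs; lra. }
  assert (Hsy : Rabs (s * Y0) <= 2 * al * Y0).
  { rewrite Rabs_mult, (Rabs_right Y0) by lra. apply Rmult_le_compat_r; lra. }
  assert (Hf : Rabs ((c - 1) * sg * X0 - s * Y0) <= 60 * (al * al) * al * Y1 + 2 * al * Y0).
  { replace ((c - 1) * sg * X0 - s * Y0) with ((c - 1) * sg * X0 + - (s * Y0)) by ring.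
    eapply Rle_trans; [apply Rabs_triang|]. rewrite Rabs_Ropp. lra. }
  assert (Hl : - (60 * (al * al) * Y1) <= sg * s * X0 <= 60 * (al * al) * Y1).
  { unfold Rabs in Hsx; destruct Rcase_abs in Hsx; lra. }
  assert (HcY : (1 - 2 * (al * al)) * Y0 <= c * Y0 <= Y0) by nra.
  unfold Y2. split; [nra|split;[nra|split;[|nra]]].
  assert (al * al * Y1 <= 1/10000 * Y1) by nra.
  assert (al * (al * al * Y1) <= al * (1/10000 * Y1)) by nra.
  nra.
Qed.


Definition smul (s : R) (p : pt) : pt := (s * fst p, s * snd p).

Lemma dist2_le_sum p q : dist2 p q <= Rabs (fst p - fst q) + Rabs (snd p - snd q).
Proof.
  unfold dist2. set (a := fst p - fst q). set (b := snd p - snd q).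
  rewrite <- (sqrt_square (Rabs a + Rabs b)) by (pose proof (Rabs_pos a); pose proof (Rabs_pos b); lra).
  apply sqrt_le_1_alt.
  pose proof (Rabs_pos a); pose proof (Rabs_pos b).
  assert (a ^ 2 = Rabs a * Rabs a) by (rewrite <- Rabs_mult; rewrite Rabs_right by nra; ring).
  assert (b ^ 2 = Rabs b * Rabs b) by (rewrite <- Rabs_mult; rewrite Rabs_right by nra; ring).
  nra.
Qed.

Lemma dist2_ge_fst p q : Rabs (fst p - fst q) <= dist2 p q.
Proof.
  unfold dist2. rewrite <- sqrt_Rsqr_abs. apply sqrt_le_1_alt.
  rewrite <- !Rsqr_pow2. pose proof (Rle_0_sqr (snd p - snd q)). lra.
Qed.

Lemma dist2_ge_snd p q : Rabs (snd p - snd q) <= dist2 p q.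
Proof.
  unfold dist2. rewrite <- sqrt_Rsqr_abs. apply sqrt_le_1_alt.
  rewrite <- !Rsqr_pow2. pose proof (Rle_0_sqr (fst p - fst q)). lra.
Qed.

Lemma dist2_triang p q r : dist2 p r <= dist2 p q + dist2 q r.
Proof.
  pose proof (triangle (fst p) (snd p) (fst r) (snd r) (fst q) (snd q)) as H.
  unfold dist_euc in H. unfold dist2. rewrite !Rsqr_pow2 in H. exact H.
Qed.

Lemma dist2_sym p q : dist2 p q = dist2 q p.
Proof. unfold dist2. f_equal. ring. Qed.

Lemma dist2_iso p q t (b : bool) :
  dist2 (Rot t (if b then p else Mir p)) (Rot t (if b then q else Mir q)) = dist2 p q.
Proof.
  unfold dist2. f_equal. pose proof (sin2_cos2 t) as H. unfold Rsqr in H.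
  destruct b; unfold Rot, Mir; simpl;
  [ transitivity (((fst p - fst q) ^ 2 + (snd p - snd q) ^ 2) * (sin t * sin t + cos t * cos t)); [ring|]
  | transitivity (((fst p - fst q) ^ 2 + (snd p - snd q) ^ 2) * (sin t * sin t + cos t * cos t)); [ring|]];
  rewrite H; ring.
Qed.

Lemma dist2_padd e p q : dist2 (padd e p) (padd e q) = dist2 p q.
Proof. unfold dist2, padd; simpl. f_equal. ring. Qed.

Lemma Ps_Pt b r : Ps b r = Pt b r.
Proof. reflexivity. Qed.

Lemma Tt_range b r : -2 <= Tt b r <= 1.
Proof. destruct b; do 6 (destruct r as [|r]; [simpl; lra|]); simpl; lra. Qed.


Definition X i al m := fst (EE i al m).
Definition Y i al m := snd (EE i al m).

Lemma VA0 i al : VA i al 0 = [(0,0); (0,1)].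
Proof.
  unfold VA, vertices. rewrite A_0. simpl. rewrite cos_PI2, sin_PI2.
  f_equal. f_equal. f_equal; ring.
Qed.

Lemma EE0 i al : EE i al 0 = (0,1).
Proof. unfold EE. rewrite VA0. reflexivity. Qed.

Lemma EE_comp i al m :
  let T := TT i (S m) in let c := cos (al * T) in let s := sin (al * T) in
  let sgm := sg (PP i (S m)) in
  X i al (S (S m)) = X i al (S m) + sgm * X i al m + ((c - 1) * sgm * X i al m - s * Y i al m) /\
  Y i al (S (S m)) = Y i al (S m) + sgm * s * X i al m + c * Y i al m.
Proof.
  intros T c s sgm. unfold X, Y. rewrite EE_rec. unfold gmap, sgm, c, s, T.
  destruct (PP i (S m)); unfold Rot, Mir, padd, sg; simpl; split; ring.
Qed.

Lemma TT_eq i m : (2 <= i)%nat -> TT i m = Tt (Nat.even i) (m mod 6) /\ PP i m = Pt (Nat.even i) (m mod 6).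
Proof. intros Hi. apply TP_period; exact Hi. Qed.

Lemma trig_T al T : 0 < al <= 1/100 -> -2 <= T <= 1 ->
  Rabs (sin (al * T)) <= 2 * al /\ 1 - 2 * al * al <= cos (al * T) <= 1.
Proof.
  intros Hal HT. split.
  - eapply Rle_trans; [apply sin_abs_le|]. rewrite Rabs_mult, Rabs_right by lra.
    assert (Rabs T <= 2) by (unfold Rabs; destruct Rcase_abs; lra). nra.
  - split; [|apply cos_le1]. pose proof (cos_lower (al * T)).
    assert (T * T <= 4) by nra.
    assert (al * T * (al * T) <= 4 * (al * al)).
    { replace (al * T * (al * T)) with ((al * al) * (T * T)) by ring.
      rewrite (Rmult_comm 4). apply Rmult_le_compat_l; nra. }
    lra.
Qed.

Lemma small_trig al : 0 < al <= 1/100 -> 0 <= sin al <= al /\ 0 <= cos al.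
Proof.
  intros Hal. pose proof PI2_1.
  split; [split|].
  - apply sin_ge_0; lra.
  - pose proof (sin_lt_x al ltac:(lra)). lra.
  - apply cos_ge_0; lra.
Qed.

Lemma base1 i al : (2 <= i)%nat -> 0 < al <= 1/100 ->
  (forall q, In q (VA i al 1) -> 0 <= fst q <= sin al * snd q /\ 0 <= snd q <= Y i al 1) /\
  0 <= X i al 1 <= sin al * Y i al 1 /\ 1 <= Y i al 1.
Proof.
  intros Hi Hal. destruct (small_trig al Hal) as [[Hs1 Hs2] Hc].
  destruct (rep_draw al (i - 1) (0,0)) as [Hq [Hl Hl2]].
  unfold VA, vertices, X, Y, EE, VA, vertices. rewrite A_1.
  set (l := draw_aux al (repeat 0%nat (i - 1) ++ [1%nat]) 1 (0,0) (PI/2)) in *.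
  split; [|split].
  - intros q Hin. destruct (Hq q Hin) as [[a [b [Hab E]]] [a' [b' [Ha' [Hb' E']]]]].
    unfold psub in E, E'; simpl in E, E'. injection E as E1 E2. injection E' as E1' E2'.
    assert (0 <= a * cos al) by nra. assert (a * sin al <= sin al * (b + a * cos al)) by nra.
    assert (0 <= a' * cos al) by nra.
    repeat split; nra.
  - destruct Hl as [a [b [Hab E]]]. unfold psub in E; simpl in E. injection E as E1 E2.
    assert (0 <= a * cos al) by nra. assert (a * sin al <= sin al * (b + a * cos al)) by nra.
    split; nra.
  - destruct Hl2 as [a [b [Ha [Hb E]]]]. unfold psub in E; simpl in E. injection E as E1 E2.
    assert (0 <= a * cos al) by nra. nra.
Qed.

Definition Inv i al n :=
  1 <= Y i al (S n) <= Y i al (S (S n)) /\ 49/100 * Y i al (S (S n)) <= Y i al (S n) /\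
  Nf (Nat.even i) ((S (S n)) mod 6) (X i al (S (S n))) (X i al (S n)) <= 10 * al * Y i al (S (S n)) /\
  INR n * (2/5) + 1 <= Y i al (S (S n)).

Lemma mod_S6 r : (S r mod 6 = S (r mod 6) mod 6)%nat.
Proof.
  replace (S r) with (r + 1)%nat by lia. replace (S (r mod 6)) with (r mod 6 + 1)%nat by lia.
  rewrite Nat.add_mod_idemp_l by lia. reflexivity.
Qed.

Lemma Inv_step' i al n : (2 <= i)%nat -> 0 < al <= 1/100 -> Inv i al n ->
  Inv i al (S n) /\ 14/10 * Y i al (S (S n)) <= Y i al (S (S (S n))).
Proof.
  intros Hi Hal [[HY1 HY2] [HY3 [HN HG]]].
  destruct (EE_comp i al (S n)) as [EX EY].
  destruct (TT_eq i (S (S n)) Hi) as [ET EP].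
  set (r := (S (S n) mod 6)%nat) in *.
  assert (Hr : (r < 6)%nat) by (apply Nat.mod_upper_bound; lia).
  set (T := TT i (S (S n))) in *.
  destruct (trig_T al T Hal) as [Hs Hc]. { rewrite ET. apply Tt_range. }
  set (c := cos (al * T)) in *. set (s := sin (al * T)) in *.
  set (sgm := sg (PP i (S (S n)))) in *.
  assert (Hsg : sgm = 1 \/ sgm = -1) by (unfold sgm, sg; destruct (PP i (S (S n))); auto).
  destruct (Nf_rec (Nat.even i) r (X i al (S (S n))) (X i al (S n)) Hr) as [_ HX0].
  pose proof (Nf_step (Nat.even i) r (X i al (S (S n))) (X i al (S n))
     ((c - 1) * sgm * X i al (S n) - s * Y i al (S n)) Hr) as HS.
  rewrite Ps_Pt, <- EP in HS. fold sgm in HS. rewrite <- EX in HS.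
  destruct (step_real al c s sgm (X i al (S n)) (Y i al (S n)) (Y i al (S (S n)))
     _ _ Hal Hs Hc Hsg (conj HY1 HY2) HY3 HN HX0 HS) as [R1 [R2 [R3 R4]]].
  rewrite <- EY in R1, R2, R3, R4.
  split; [|exact R4].
  unfold Inv. split; [split; lra|split;[lra|split;[|]]].
  { unfold r in R3. rewrite <- mod_S6 in R3. exact R3. }
  rewrite S_INR. lra.
Qed.

Lemma Inv_step i al n : (2 <= i)%nat -> 0 < al <= 1/100 -> Inv i al n -> Inv i al (S n).
Proof. intros. apply Inv_step'; auto. Qed.

Lemma Inv0 i al : (2 <= i)%nat -> 0 < al <= 1/100 -> Inv i al 0.
Proof.
  intros Hi Hal. destruct (base1 i al Hi Hal) as [_ [HX1 HY1]].
  destruct (small_trig al Hal) as [[Hs1 Hs2] Hc0].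
  destruct (EE_comp i al 0) as [EX EY].
  assert (X0 : X i al 0 = 0) by (unfold X; rewrite EE0; reflexivity).
  assert (Y0 : Y i al 0 = 1) by (unfold Y; rewrite EE0; reflexivity).
  rewrite X0, Y0 in EX, EY.
  destruct (TT_eq i 1 Hi) as [ET EP].
  set (T := TT i 1) in *.
  destruct (trig_T al T Hal) as [Hs Hc]. { rewrite ET. apply Tt_range. }
  set (c := cos (al * T)) in *. set (s := sin (al * T)) in *.
  assert (EY' : Y i al 2 = Y i al 1 + c) by (rewrite EY; ring).
  assert (EX' : X i al 2 = X i al 1 - s) by (rewrite EX; ring).
  assert (Ha2 : al * al <= 1/10000) by nra.
  unfold Inv. simpl (INR 0).
  split; [split; lra|split; [lra|split; [|lra]]].
  assert (Hr : (2 mod 6 < 6)%nat) by (simpl; lia).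
  eapply Rle_trans; [apply Nf_bound; exact Hr|].
  assert (Rabs (X i al 1) <= al * Y i al 1).
  { rewrite Rabs_right by lra. nra. }
  assert (Rabs (X i al 2) <= al * Y i al 1 + 2 * al).
  { rewrite EX'. unfold Rminus. eapply Rle_trans; [apply Rabs_triang|]. rewrite Rabs_Ropp. lra. }
  unfold Rmax. destruct Rle_dec; nra.
Qed.

Lemma Inv_all i al : (2 <= i)%nat -> 0 < al <= 1/100 -> forall n, Inv i al n.
Proof.
  intros Hi Hal n. induction n as [|n IH]; [apply Inv0; auto|apply Inv_step; auto].
Qed.

Lemma Xbound i al m : (2 <= i)%nat -> 0 < al <= 1/100 -> (1 <= m)%nat ->
  Rabs (X i al m) <= 30 * al * Y i al m /\ 1 <= Y i al m.
Proof.
  intros Hi Hal Hm. destruct m as [|[|n]]; [lia| |].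
  - destruct (base1 i al Hi Hal) as [_ [HX1 HY1]].
    destruct (small_trig al Hal) as [[Hs1 Hs2] Hc0].
    rewrite Rabs_right by lra. split; nra.
  - destruct (Inv_all i al Hi Hal n) as [[H1 H2] [H3 [H4 H5]]].
    assert (Hr : ((S (S n)) mod 6 < 6)%nat) by (apply Nat.mod_upper_bound; lia).
    destruct (Nf_rec (Nat.even i) _ (X i al (S (S n))) (X i al (S n)) Hr) as [HX _].
    split; lra.
Qed.

Lemma growth i al n : (2 <= i)%nat -> 0 < al <= 1/100 ->
  14/10 * Y i al (S (S n)) <= Y i al (S (S (S n))).
Proof. intros Hi Hal. apply (Inv_step' i al n Hi Hal (Inv_all i al Hi Hal n)). Qed.


Definition Habs i al m (d : R) : Prop :=
  forall q, In q (VA i al m) -> exists s, 0 <= s <= 1 /\ dist2 q (smul s (EE i al m)) <= d.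

Lemma abs_comb a b x y : 0 <= a <= 1 -> 0 <= b <= 1 -> Rabs (a * x - b * y) <= Rabs x + Rabs y.
Proof.
  intros Ha Hb. unfold Rabs; repeat destruct Rcase_abs; nra.
Qed.

Lemma gmap_smul i al m s v :
  gmap i al m (smul s v) =
  (fst (EE i al m) + s * (fst (gmap i al m v) - fst (EE i al m)),
   snd (EE i al m) + s * (snd (gmap i al m v) - snd (EE i al m))).
Proof.
  unfold gmap, smul. destruct (PP i m); unfold Rot, Mir, padd; simpl; f_equal; ring.
Qed.

Lemma chord_close (x1 y x2 y' a b : R) : 0 <= a <= 1 -> 0 <= b <= 1 ->
  y = y' -> dist2 (a * x1, y) (b * x2, y') <= Rabs x1 + Rabs x2.
Proof.
  intros Ha Hb E. eapply Rle_trans; [apply dist2_le_sum|]. simpl.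
  rewrite E. replace (y' - y') with 0 by ring. rewrite Rabs_R0, Rplus_0_r.
  apply abs_comb; auto.
Qed.

Lemma Hstep i al m da db :
  0 < Y i al (S m) <= Y i al (S (S m)) ->
  Habs i al m da -> Habs i al (S m) db ->
  Habs i al (S (S m)) (Rmax da db + Rabs (X i al (S m)) + Rabs (X i al (S (S m)))).
Proof.
  intros HY Ha Hb q Hq.
  set (X1 := X i al (S m)) in *. set (X2 := X i al (S (S m))) in *.
  set (Y1 := Y i al (S m)) in *. set (Y2 := Y i al (S (S m))) in *.
  assert (E1 : EE i al (S m) = (X1, Y1)) by (unfold X1, Y1, X, Y; destruct (EE i al (S m)); reflexivity).
  assert (E2 : EE i al (S (S m)) = (X2, Y2)) by (unfold X2, Y2, X, Y; destruct (EE i al (S (S m))); reflexivity).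
  destruct (VA_in i al m q Hq) as [Hin|[r [Hr Eq]]].
  - destruct (Hb q Hin) as [s [Hs Hd]].
    exists (s * Y1 / Y2). split.
    + split. apply Rmult_le_pos; [nra|left; apply Rinv_0_lt_compat; lra].
      apply Rmult_le_reg_r with Y2; [lra|]. unfold Rdiv. rewrite Rmult_assoc, Rinv_l by lra. nra.
    + eapply Rle_trans; [apply dist2_triang with (q := smul s (EE i al (S m)))|].
      rewrite E1, E2 in *. unfold smul in *; simpl in *.
      assert (dist2 (s * X1, s * Y1) (s * Y1 / Y2 * X2, s * Y1 / Y2 * Y2) <= Rabs X1 + Rabs X2).
      { apply chord_close; auto; [|field; lra].
        split. apply Rmult_le_pos; [nra|left; apply Rinv_0_lt_compat; lra].
        apply Rmult_le_reg_r with Y2; [lra|]. unfold Rdiv. rewrite Rmult_assoc, Rinv_l by lra. nra. }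
      pose proof (Rmax_r da db). lra.
  - destruct (Ha r Hr) as [s [Hs Hd]].
    assert (Hg : dist2 q (gmap i al (S m) (smul s (EE i al m))) <= da).
    { rewrite Eq. unfold gmap. rewrite dist2_padd, dist2_iso. exact Hd. }
    rewrite gmap_smul, <- EE_rec, E1, E2 in Hg. simpl in Hg.
    set (t := (Y1 + s * (Y2 - Y1)) / Y2).
    assert (Ht : s <= t <= 1).
    { unfold t. split.
      - apply Rmult_le_reg_r with Y2; [lra|]. unfold Rdiv. rewrite Rmult_assoc, Rinv_l by lra. nra.
      - apply Rmult_le_reg_r with Y2; [lra|]. unfold Rdiv. rewrite Rmult_assoc, Rinv_l by lra. nra. }
    exists t. split; [lra|].
    eapply Rle_trans; [apply dist2_triang with (q := (X1 + s * (X2 - X1), Y1 + s * (Y2 - Y1)))|].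
    rewrite E2. unfold smul; simpl.
    assert (dist2 (X1 + s * (X2 - X1), Y1 + s * (Y2 - Y1)) (t * X2, t * Y2) <= Rabs X1 + Rabs X2).
    { eapply Rle_trans; [apply dist2_le_sum|]. simpl.
      replace (Y1 + s * (Y2 - Y1) - t * Y2) with 0 by (unfold t; field; lra).
      rewrite Rabs_R0, Rplus_0_r.
      replace (X1 + s * (X2 - X1) - t * X2) with ((1 - s) * X1 - (t - s) * X2) by ring.
      apply abs_comb; lra. }
    pose proof (Rmax_l da db). lra.
Qed.

Lemma Habs_mono i al m d d' : d <= d' -> Habs i al m d -> Habs i al m d'.
Proof. intros Hd H q Hq. destruct (H q Hq) as [s [Hs Hq']]. exists s. split; [auto|lra]. Qed.

Lemma dist2_refl p : dist2 p p = 0.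
Proof. unfold dist2. replace ((fst p - fst p) ^ 2 + (snd p - snd p) ^ 2) with 0 by ring. apply sqrt_0. Qed.

Lemma Habs0 i al : Habs i al 0 0.
Proof.
  intros q Hq. rewrite VA0 in Hq. unfold EE. rewrite VA0. simpl last.
  destruct Hq as [H|[H|H]]; [| |contradiction]; subst q.
  - exists 0. split; [lra|]. unfold smul; simpl. rewrite !Rmult_0_l, dist2_refl. lra.
  - exists 1. split; [lra|]. unfold smul; simpl. rewrite !Rmult_1_l, dist2_refl. lra.
Qed.

Lemma Habs1 i al : (2 <= i)%nat -> 0 < al <= 1/100 -> Habs i al 1 (al * Y i al 1).
Proof.
  intros Hi Hal q Hq. destruct (base1 i al Hi Hal) as [Hb [HX HY]].
  destruct (Hb q Hq) as [Hq1 Hq2].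
  destruct (small_trig al Hal) as [[Hs1 Hs2] Hc0].
  exists (snd q / Y i al 1). split.
  - split. apply Rmult_le_pos; [lra|left; apply Rinv_0_lt_compat; lra].
    apply Rmult_le_reg_r with (Y i al 1); [lra|]. unfold Rdiv. rewrite Rmult_assoc, Rinv_l by lra. lra.
  - eapply Rle_trans; [apply dist2_le_sum|]. unfold smul. simpl.
    fold (X i al 1). fold (Y i al 1).
    replace (snd q - snd q / Y i al 1 * Y i al 1) with 0 by (field; lra).
    rewrite Rabs_R0, Rplus_0_r.
    assert (0 <= snd q / Y i al 1 * X i al 1 <= al * Y i al 1).
    { assert (0 <= snd q / Y i al 1 <= 1).
      { split. apply Rmult_le_pos; [lra|left; apply Rinv_0_lt_compat; lra].
        apply Rmult_le_reg_r with (Y i al 1); [lra|]. unfold Rdiv. rewrite Rmult_assoc, Rinv_l by lra. lra. }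
      split; nra. }
    assert (fst q <= al * Y i al 1) by nra.
    unfold Rabs; destruct Rcase_abs; lra.
Qed.

Lemma Habs_all i al : (2 <= i)%nat -> 0 < al <= 1/100 -> forall n,
  Habs i al (S n) (200 * al * Y i al (S n)) /\ Habs i al (S (S n)) (200 * al * Y i al (S (S n))).
Proof.
  intros Hi Hal n. induction n as [|n [IH1 IH2]].
  - pose proof (Habs1 i al Hi Hal) as H1.
    destruct (Inv_all i al Hi Hal 0) as [[HY1 HY2] _].
    destruct (Xbound i al 1 Hi Hal ltac:(lia)) as [HX1 _].
    destruct (Xbound i al 2 Hi Hal ltac:(lia)) as [HX2 _].
    split.
    + eapply Habs_mono; [|exact H1]. nra.
    + eapply Habs_mono; [|apply Hstep; [lra|apply Habs0|exact H1]].
      unfold Rmax; destruct Rle_dec; nra.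
  - split; [exact IH2|].
    destruct (Inv_all i al Hi Hal n) as [[HY1 HY2] _].
    pose proof (growth i al n Hi Hal) as HG.
    destruct (Xbound i al (S (S n)) Hi Hal ltac:(lia)) as [HX1 _].
    destruct (Xbound i al (S (S (S n))) Hi Hal ltac:(lia)) as [HX2 _].
    eapply Habs_mono; [|apply Hstep; [lra|exact IH1|exact IH2]].
    unfold Rmax; destruct Rle_dec; nra.
Qed.


Lemma draw_len al w : forall j p th, length (draw_aux al w j p th) = S (length w).
Proof. induction w; intros; simpl; [reflexivity|rewrite IHw; reflexivity]. Qed.

Lemma draw_consec al w : forall j p th k, (S k < length (draw_aux al w j p th))%nat ->
  Rabs (fst (nth (S k) (draw_aux al w j p th) (0,0)) - fst (nth k (draw_aux al w j p th) (0,0))) <= 1 /\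
  Rabs (snd (nth (S k) (draw_aux al w j p th) (0,0)) - snd (nth k (draw_aux al w j p th) (0,0))) <= 1.
Proof.
  induction w as [|a w IH]; intros j p th k Hk; simpl in Hk; [lia|].
  destruct k as [|k].
  - cbn [draw_aux nth]. destruct w; simpl;
    replace (fst p + cos th - fst p) with (cos th) by ring;
    replace (snd p + sin th - snd p) with (sin th) by ring;
    pose proof (COS_bound th); pose proof (SIN_bound th);
    split; unfold Rabs; destruct Rcase_abs; lra.
  - cbn [draw_aux]. change (nth (S (S k)) (p :: ?l) ?d) with (nth (S k) l d).
    change (nth (S k) (p :: ?l) ?d) with (nth k l d).
    apply IH. rewrite draw_len in *. lia.
Qed.

Lemma draw_first al w j p th : nth 0 (draw_aux al w j p th) (0,0) = p.
Proof. destruct w; reflexivity. Qed.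

Lemma draw_ivt al w : forall j p th t,
  snd p <= t <= snd (last (draw_aux al w j p th) (0,0)) ->
  exists q, In q (draw_aux al w j p th) /\ Rabs (snd q - t) <= 1.
Proof.
  induction w as [|a w IH]; intros j p th t Ht.
  - simpl in Ht. exists p. split; [left; reflexivity|]. unfold Rabs; destruct Rcase_abs; lra.
  - destruct (Rle_dec t (snd p + 1)) as [H|H].
    + exists p. split; [left; reflexivity|]. unfold Rabs; destruct Rcase_abs; lra.
    + cbn [draw_aux] in *.
      assert (Hlast : forall (l : list pt), l <> [] -> last (p :: l) (0,0) = last l (0,0))
        by (intros l Hl; destruct l; [contradiction|reflexivity]).
      rewrite Hlast in Ht by apply draw_nonnil.
      destruct (IH (S j) (fst p + cos th, snd p + sin th)
        (if (a =? 0)%nat then if Nat.even j then th + al else th - al else th) t) as [q [Hq1 Hq2]].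
      * simpl. pose proof (SIN_bound th). split; lra.
      * exists q. split; [right; exact Hq1|exact Hq2].
Qed.

Lemma in_curve al w q : w <> [] -> In q (vertices al w) -> curve al w q.
Proof.
  intros Hw Hq. apply In_nth with (d := (0,0)) in Hq. destruct Hq as [k [Hk E]].
  unfold vertices in *. rewrite draw_len in Hk.
  destruct (Nat.lt_ge_cases (S k) (S (length w))) as [H|H].
  - exists k. split; [unfold vertices; rewrite draw_len; exact H|].
    exists 0. split; [lra|]. rewrite <- E. destruct (nth k _ _) as [a b]. simpl. f_equal; ring.
  - destruct k as [|k]. { destruct w; [contradiction|simpl in H; lia]. }
    exists k. split; [unfold vertices; rewrite draw_len; lia|].
    exists 1. split; [lra|]. rewrite <- E. destruct (nth (S k) _ _) as [a b]. simpl. f_equal; ring.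
Qed.

Lemma curve_near al w x : curve al w x ->
  exists q, In q (vertices al w) /\ dist2 x q <= 2.
Proof.
  intros [k [Hk [t [Ht E]]]]. exists (nth k (vertices al w) (0,0)). split.
  - apply nth_In. lia.
  - unfold vertices in *. destruct (draw_consec al w 1 (0,0) (PI/2) k Hk) as [H1 H2].
    eapply Rle_trans; [apply dist2_le_sum|]. rewrite E. simpl.
    set (a0 := nth k _ _) in *. set (a1 := nth (S k) _ _) in *.
    replace ((1 - t) * fst a0 + t * fst a1 - fst a0) with (t * (fst a1 - fst a0)) by ring.
    replace ((1 - t) * snd a0 + t * snd a1 - snd a0) with (t * (snd a1 - snd a0)) by ring.
    rewrite !Rabs_mult, (Rabs_right t) by lra.
    assert (t * Rabs (fst a1 - fst a0) <= 1) by (pose proof (Rabs_pos (fst a1 - fst a0)); nra).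
    assert (t * Rabs (snd a1 - snd a0) <= 1) by (pose proof (Rabs_pos (snd a1 - snd a0)); nra).
    lra.
Qed.


Lemma dist2_scale c p q : 0 <= c -> dist2 (smul c p) (smul c q) = c * dist2 p q.
Proof.
  intros Hc. unfold dist2, smul; cbn [fst snd].
  replace ((c * fst p - c * fst q) ^ 2 + (c * snd p - c * snd q) ^ 2)
    with ((c * c) * ((fst p - fst q) ^ 2 + (snd p - snd q) ^ 2)) by ring.
  rewrite sqrt_mult_alt by nra. rewrite sqrt_square by lra. reflexivity.
Qed.

Lemma sqrt2_bounds : 0 < sqrt 2 <= 3/2.
Proof.
  split. apply sqrt_lt_R0; lra.
  rewrite <- (sqrt_square (3/2)) by lra. apply sqrt_le_1_alt. lra.
Qed.

Lemma A_nonnil i m : (2 <= i)%nat -> A i m <> [].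
Proof.
  intros Hi. induction m as [m IH] using (well_founded_induction lt_wf).
  destruct m as [|[|m]].
  - discriminate.
  - rewrite A_1. destruct (repeat 0%nat (i - 1)); discriminate.
  - rewrite A_SS. intros H. apply app_eq_nil in H. destruct H as [H _]. apply (IH (S m)); auto.
Qed.

Lemma end_close c s X Y W : 0 <= s <= 1 -> 0 < c -> c * W = sqrt 2 ->
  Rabs (W - Y) <= Rabs X ->
  dist2 (smul c (smul s (X, Y))) (0, s * sqrt 2) <= 2 * c * Rabs X.
Proof.
  intros Hs Hc HW HWY. eapply Rle_trans; [apply dist2_le_sum|]. unfold smul; simpl.
  replace (c * (s * X) - 0) with (s * (c * X)) by ring.
  replace (c * (s * Y) - s * sqrt 2) with (s * (c * (Y - W))) by (rewrite <- HW; ring).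
  rewrite !Rabs_mult, (Rabs_right s), (Rabs_right c) by lra.
  rewrite <- Rabs_Ropp in HWY. replace (- (W - Y)) with (Y - W) in HWY by ring.
  pose proof (Rabs_pos X). pose proof (Rabs_pos (Y - W)).
  assert (0 <= c * Rabs X) by (apply Rmult_le_pos; lra).
  assert (0 <= c * Rabs (Y - W)) by (apply Rmult_le_pos; lra).
  assert (s * (c * Rabs X) <= c * Rabs X) by nra.
  assert (c * Rabs (Y - W) <= c * Rabs X) by (apply Rmult_le_compat_l; lra).
  assert (s * (c * Rabs (Y - W)) <= c * Rabs (Y - W)) by nra.
  lra.
Qed.

Lemma norm_close i al n : (2 <= i)%nat -> 0 < al <= 1/100 ->
  let M := S (S n) in
  let c := sqrt 2 / width al (A i M) in
  hclose (dilate c (curve al (A i M))) fractal0 (3 / Y i al M + 1000 * al).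
Proof.
  intros Hi Hal M c.
  destruct (Xbound i al M Hi Hal ltac:(unfold M; lia)) as [HX HY1].
  destruct (Habs_all i al Hi Hal n) as [_ HH]. fold M in HH.
  set (E := EE i al M) in *.
  set (Xm := X i al M) in *. set (Ym := Y i al M) in *.
  assert (HE : E = (Xm, Ym)) by (unfold Xm, Ym, X, Y; fold E; destruct E; reflexivity).
  set (W := width al (A i M)) in *.
  assert (HWd : W = dist2 (0,0) E) by reflexivity.
  assert (HW1 : Ym <= W).
  { pose proof (dist2_ge_snd E (0,0)). rewrite dist2_sym, <- HWd in H. rewrite HE in H. simpl in H.
    rewrite Rabs_right in H by lra. lra. }
  assert (HW2 : W <= Rabs Xm + Ym).
  { pose proof (dist2_le_sum (0,0) E). rewrite <- HWd, HE in H. simpl in H.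
    rewrite (Rabs_minus_sym 0 Xm), Rminus_0_r, (Rabs_minus_sym 0 Ym), Rminus_0_r, (Rabs_right Ym) in H by lra.
    lra. }
  assert (HWY : Rabs (W - Ym) <= Rabs Xm) by (rewrite Rabs_right by lra; lra).
  destruct sqrt2_bounds as [Hs1 Hs2].
  assert (Hc : 0 < c) by (unfold c; apply Rdiv_lt_0_compat; lra).
  assert (HcW : c * W = sqrt 2) by (unfold c; field; lra).
  assert (HcY : c * Ym <= 3/2) by (assert (c * Ym <= c * W) by (apply Rmult_le_compat_l; lra); lra).
  assert (Hc3 : 2 * c <= 3 / Ym).
  { unfold c. apply Rmult_le_reg_r with (W * Ym); [nra|].
    unfold Rdiv. replace (2 * (sqrt 2 * / W) * (W * Ym)) with (2 * sqrt 2 * Ym) by (field; lra).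
    replace (3 * / Ym * (W * Ym)) with (3 * W) by (field; lra). nra. }
  assert (HcX : c * Rabs Xm <= 45 * al).
  { assert (c * Rabs Xm <= c * (30 * al * Ym)) by (apply Rmult_le_compat_l; lra). nra. }
  assert (HcD : c * (200 * al * Ym) <= 300 * al) by nra.
  split.
  - intros x [y [Hy Ex]].
    destruct (curve_near al (A i M) y Hy) as [q [Hq Hyq]].
    destruct (HH q Hq) as [s [Hs Hqs]].
    exists (0, s * sqrt 2). split.
    + exists s. split; [exact Hs|reflexivity].
    + subst x. change (c * fst y, c * snd y) with (smul c y).
      eapply Rle_trans; [apply (dist2_triang _ (smul c q) _)|].
      eapply Rle_trans; [apply Rplus_le_compat_l; apply (dist2_triang _ (smul c (smul s E)) _)|].
      rewrite !dist2_scale by lra.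
      pose proof (end_close c s Xm Ym W Hs Hc HcW HWY) as HEc. rewrite <- HE in HEc.
      assert (c * dist2 y q <= 2 * c) by (pose proof (Rmult_le_compat_l c _ _ (Rlt_le _ _ Hc) Hyq); lra).
      assert (c * dist2 q (smul s E) <= c * (200 * al * Ym)) by (apply Rmult_le_compat_l; [lra|exact Hqs]).
      lra.
  - intros z [t [Ht Ez]].
    destruct (draw_ivt al (A i M) 1 (0,0) (PI/2) (t * Ym)) as [q [Hq Hqt]].
    { simpl. change (last (draw_aux al (A i M) 1 (0, 0) (PI / 2)) (0, 0)) with E. rewrite HE. simpl. nra. }
    fold (vertices al (A i M)) in Hq. fold (VA i al M) in Hq.
    destruct (HH q Hq) as [s [Hs Hqs]].
    exists (smul c q). split.
    + exists q. split; [apply in_curve; [apply A_nonnil; auto|exact Hq]|reflexivity].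
    + subst z.
      assert (Hst : Rabs (s - t) * Ym <= 1 + 200 * al * Ym).
      { change (EE i al M) with E in Hqs.
        pose proof (dist2_ge_snd q (smul s E)) as H.
        assert (Hm : Rabs ((s - t) * Ym) <= 1 + 200 * al * Ym).
        { replace ((s - t) * Ym) with ((s * Ym - snd q) + (snd q - t * Ym)) by ring.
          eapply Rle_trans; [apply Rabs_triang|]. rewrite <- Rabs_Ropp.
          replace (- (s * Ym - snd q)) with (snd q - s * Ym) by ring.
          rewrite HE in H. unfold smul in H; simpl in H. rewrite HE in Hqs. unfold smul in Hqs. simpl in Hqs. lra. }
        rewrite Rabs_mult, (Rabs_right Ym) in Hm by lra. exact Hm. }
      assert (HsE : dist2 (smul s E) (smul t E) <= Rabs (s - t) * Ym * (1 + 30 * al)).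
      { eapply Rle_trans; [apply dist2_le_sum|]. rewrite HE. unfold smul; simpl.
        replace (s * Xm - t * Xm) with ((s - t) * Xm) by ring.
        replace (s * Ym - t * Ym) with ((s - t) * Ym) by ring.
        rewrite !Rabs_mult, (Rabs_right Ym) by lra. pose proof (Rabs_pos (s - t)). nra. }
      eapply Rle_trans; [apply (dist2_triang _ (smul c (smul s E)) _)|].
      eapply Rle_trans; [apply Rplus_le_compat_l; apply (dist2_triang _ (smul c (smul t E)) _)|].
      rewrite !dist2_scale by lra.
      pose proof (end_close c t Xm Ym W Ht Hc HcW HWY) as HEc. rewrite <- HE in HEc.
      assert (c * dist2 q (smul s E) <= c * (200 * al * Ym)) by (apply Rmult_le_compat_l; [lra|exact Hqs]).
      assert (c * dist2 (smul s E) (smul t E) <= c * ((1 + 200 * al * Ym) * (1 + 30 * al))).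
      { apply Rmult_le_compat_l; [lra|]. eapply Rle_trans; [exact HsE|].
        apply Rmult_le_compat_r; lra. }
      assert (c * ((1 + 200 * al * Ym) * (1 + 30 * al)) <= 13/10 * c + 13/10 * (300 * al)) by nra.
      lra.
Qed.


Lemma hclose_trans A B C d1 d2 : hclose B A d1 -> hclose B C d2 -> hclose A C (d1 + d2).
Proof.
  intros [H1 H2] [H3 H4]. split.
  - intros x Hx. destruct (H2 x Hx) as [y [Hy Hyx]]. destruct (H3 y Hy) as [z [Hz Hyz]].
    exists z. split; [exact Hz|]. pose proof (dist2_triang x y z). rewrite dist2_sym in Hyx. lra.
  - intros z Hz. destruct (H4 z Hz) as [y [Hy Hyz]]. destruct (H1 y Hy) as [x [Hx Hyx]].
    exists x. split; [exact Hx|]. pose proof (dist2_triang x y z). rewrite dist2_sym in Hyx. lra.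
Qed.

Lemma hclose_mono A B d d' : d <= d' -> hclose A B d -> hclose A B d'.
Proof.
  intros Hd [H1 H2]. split.
  - intros x Hx. destruct (H1 x Hx) as [y [Hy H]]. exists y. split; [auto|lra].
  - intros y Hy. destruct (H2 y Hy) as [x [Hx H]]. exists x. split; [auto|lra].
Qed.

Theorem theorem5p11 (i : nat) (Hi : (2 <= i)%nat) (F : R -> pt -> Prop)
  (HF : forall alpha, 0 < alpha <= PI / 2 ->
        nonempty_set (F alpha) /\ compact_set (F alpha) /\
        hausdorff_limit (normalized_curve i alpha) (F alpha)) :
  forall e, 0 < e -> exists d, 0 < d /\
    forall alpha, 0 < alpha < d -> alpha <= PI / 2 ->
      hclose (F alpha) fractal0 e.
Proof.
  intros e He. exists (Rmin (1/100) (e/4000)). split.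
  { apply Rmin_pos; lra. }
  intros al [Hal0 Hald] Halpi.
  pose proof (Rmin_l (1/100) (e/4000)). pose proof (Rmin_r (1/100) (e/4000)).
  assert (Hal : 0 < al <= 1/100) by lra.
  destruct (HF al (conj Hal0 Halpi)) as [_ [_ Hlim]].
  destruct (Hlim (e/2) ltac:(lra)) as [k0 Hk0].
  destruct (INR_unbounded (30 / e)) as [N HN].
  set (k := (k0 + N)%nat).
  specialize (Hk0 k ltac:(unfold k; lia)).
  assert (Hm : (6 * k + 3 <= m_index i k)%nat) by (unfold m_index; destruct (Nat.even i); lia).
  set (n := (m_index i k - 3)%nat).
  assert (Hfw : fib_word i (m_index i k) = A i (S (S n))).
  { unfold fib_word, A, n. f_equal. f_equal. lia. }
  pose proof (norm_close i al n Hi Hal) as Hc. simpl in Hc.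
  unfold normalized_curve in Hk0. rewrite Hfw in Hk0.
  destruct (Inv_all i al Hi Hal n) as [_ [_ [_ HG]]].
  assert (HnN : INR N <= INR n) by (apply le_INR; unfold n, k in *; lia).
  assert (He' : 30 / e * e = 30) by (field; lra).
  assert (HN' : 30 < INR N * e) by (assert (30 / e * e < INR N * e) by (apply Rmult_lt_compat_r; lra); lra).
  set (YM := Y i al (S (S n))) in *.
  assert (HY : 3 / YM <= e / 4).
  { pose proof (pos_INR n). assert (e * (INR n * (2/5) + 1) <= e * YM) by (apply Rmult_le_compat_l; lra).
    assert (e * INR N <= e * INR n) by (apply Rmult_le_compat_l; lra).
    assert (H12 : 12 <= e * YM) by nra.
    assert (e/4 - 3/YM = (e*YM - 12)/(4*YM)) by (field; lra).
    assert (0 <= (e*YM - 12)/(4*YM)) by (unfold Rdiv; apply Rmult_le_pos; [lra|left; apply Rinv_0_lt_compat; lra]). lra. }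
  apply (hclose_mono _ _ (e/2 + (3 / YM + 1000 * al))); [lra|].
  eapply hclose_trans; [exact Hk0|exact Hc].
Qed.
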